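(* For any L-primitive set $A\subset\mathbb{Z}_{>1}$, the lower natural density satisfies $\underline{\mathrm{d}}(\mathrm{L}_A)\ge\sum_{a\in A}\mathrm{d}(\mathrm{L}_a)$. Moreover, if $\sum_{a\in A}1/a<\infty$, then the natural density $\mathrm{d}(\mathrm{L}_A)$ exists and equals $\sum_{a\in A}\mathrm{d}(\mathrm{L}_a)$.
   Context: For an integer $a>1$ with largest prime factor $P(a)$, $\mathrm{L}_a=\{ba: b\in\mathbb{N},\ \text{every prime } p\mid b \text{ satisfies } p\ge P(a)\}$, which has natural density $\mathrm{d}(\mathrm{L}_a)=\frac1a\prod_{p<P(a)}(1-\frac1p)$; $\mathrm{L}_A=\bigcup_{a\in A}\mathrm{L}_a$. $\underline{\mathrm{d}}(S)=\liminf_{x\to\infty}|S\cap[1,x]|/x$. A set $A\subset\mathbb{Z}_{>1}$ is L-primitive if $a'\notin\mathrm{L}_a$ for all distinct $a,a'\in A$. *)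

(* Defs.v *)
From HB Require Import structures.
From mathcomp Require Import all_boot all_order all_algebra.
From mathcomp Require Import all_classical all_reals all_analysis.
Set Implicit Arguments. Unset Strict Implicit. Unset Printing Implicit Defensive.
Import Order.TTheory GRing.Theory Num.Theory.
Local Open Scope classical_set_scope.
Local Open Scope ring_scope.

Definition P (a : nat) : nat := max_pdiv a.

Definition L (a : nat) : set nat :=
  [set n | exists b : nat, (0 < b)%N /\ n = (b * a)%N /\
           (forall p : nat, prime p -> (p %| b)%N -> (P a <= p)%N)].

Definition LA (A : set nat) : set nat := \bigcup_(a in A) L a.

Definition dL (R : realType) (a : nat) : R :=
  (a%:R)^-1 * \prod_(p < P a | prime p) (1 - (p%:R)^-1).

Definition Lprimitive (A : set nat) : Prop :=
  forall a a', A a -> A a' -> a <> a' -> ~ L a a'.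

Definition count_ratio (R : realType) (S : set nat) (N : nat) : R :=
  (\sum_(1 <= n < N.+1) ((n \in S) : nat)%:R) / N%:R.

(* Main.v *)
Require Import Defs.
From HB Require Import structures.
From mathcomp Require Import all_boot all_order all_algebra.
From mathcomp Require Import all_classical all_reals all_analysis.
From mathcomp Require Import zify.
Import Order.TTheory GRing.Theory Num.Theory.
Local Open Scope classical_set_scope.
Section Arith.
Local Open Scope nat_scope.

Definition Mp (a : nat) : nat := \prod_(p < P a | prime p) p.

Lemma Mp_gt0 a : 0 < Mp a.
Proof. by rewrite /Mp big_mkcond prodn_gt0 // => i; case: ifP => // /prime_gt0. Qed.

Lemma coprime_MpP a b :
  reflect (forall p, prime p -> p %| b -> P a <= p) (coprime b (Mp a)).
Proof.
apply: (iffP idP).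
- move=> cb p pp pb; rewrite leqNgt; apply/negP => lt.
  have pM : p %| Mp a.
    by rewrite /Mp (bigD1 (Ordinal lt)) //= dvdn_mulr.
  have := coprime_dvdl pb cb; rewrite prime_coprime // pM //.
- move=> H; rewrite coprime_sym /Mp.
  apply: (big_ind (fun x => coprime x b)).
  + exact: coprime1n.
  + by move=> x y; rewrite coprimeMl => -> ->.
  + move=> [i /= lti] pi; rewrite prime_coprime //; apply/negP => /(H _ pi).
    by rewrite leqNgt lti.
Qed.

Lemma Lchar a n : 0 < a -> 0 < n ->
  L a n <-> (a %| n) && coprime (n %/ a) (Mp a).
Proof.
move=> a0 n0; split.
- move=> [b [b0 [-> Hb]]]; rewrite dvdn_mull // mulnK //=.
  by apply/coprime_MpP.
- move=> /andP[an cop]; exists (n %/ a); split; last split.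
  + by rewrite divn_gt0 // dvdn_leq.
  + by rewrite divnK.
  + exact/coprime_MpP.
Qed.

Lemma sum_reindex a N (F : nat -> nat) : 0 < a ->
  \sum_(1 <= n < N.+1) (if a %| n then F (n %/ a) else 0)
  = \sum_(1 <= b < (N %/ a).+1) F b.
Proof.
move=> a0; elim: N => [|N IH].
  by rewrite div0n !big_geq.
rewrite big_nat_recr //= IH (divnS _ a0).
case: ifP => an /=; rewrite ?an; last by rewrite ?add0n ?addn0.
by rewrite add1n [in RHS]big_nat_recr.
Qed.

Lemma sum_dvd a N : 0 < a -> \sum_(1 <= n < N.+1) (a %| n : nat) = N %/ a.
Proof.
move=> a0; rewrite (eq_big_nat _ _ (F2 := fun n => if a %| n then 1 else 0)).
  by rewrite (sum_reindex a N (fun _ => 1) a0) sum_nat_const_nat subn1 /= muln1.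
by move=> i _; case: (a %| i).
Qed.

Definition cc (K M : nat) := \sum_(1 <= b < K.+1) (coprime b M : nat).

Lemma cc_mono K K' M : K <= K' -> cc K M <= cc K' M.
Proof.
move=> le; rewrite /cc [in X in _ <= X](big_cat_nat _ (n := K.+1)) //=; first exact: leq_addr.
Qed.

Lemma cc_M M : cc M M = totient M.
Proof.
rewrite totient_count_coprime /cc.
have e1 : \sum_(0 <= i < M.+1) (coprime i M : nat) = (coprime 0 M : nat) + \sum_(0 <= i < M) (coprime i.+1 M : nat) by rewrite big_nat_recl.
have e2 : \sum_(0 <= i < M.+1) (coprime i M : nat) = \sum_(0 <= i < M) (coprime i M : nat) + (coprime M M : nat) by rewrite big_nat_recr.
have e3 : \sum_(0 <= i < M) (coprime i M : nat) = \sum_(0 <= i < M) (coprime M i : nat).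
  by apply: eq_big_nat => i _; rewrite coprime_sym.
have : coprime 0 M = coprime M M by rewrite /coprime gcd0n gcdnn.
rewrite big_add1 /=.
have f0 : (coprime 0 M : nat) = coprime M M by rewrite /coprime gcd0n gcdnn.
rewrite -e3; move: e1 e2; rewrite f0; lia.
Qed.

End Arith.
Section Arith2.
Local Open Scope nat_scope.

Lemma cc_mul M j : 0 < M -> cc (j * M) M = j * totient M.
Proof.
move=> M0; elim: j => [|j IH]; first by rewrite mul0n /cc big_geq.
rewrite /cc mulSn (big_cat_nat _ (n := (j*M).+1)) //=; [|lia].
rewrite -[(j*M).+1]add1n big_addn.
have -> : (M + j * M).+1 - j * M = M.+1 by lia.
rewrite [X in X + _]IH.
rewrite (eq_big_nat _ _ (F2 := fun i => (coprime i M : nat))); last first.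
  by move=> i _; rewrite -coprime_modl addnC modnMDl coprime_modl.
by rewrite -/(cc M M) cc_M; lia.
Qed.

Lemma cc_bounds K M : 0 < M ->
  (K %/ M) * totient M <= cc K M <= (K %/ M).+1 * totient M.
Proof.
move=> M0; rewrite -!cc_mul //; apply/andP; split; apply: cc_mono.
  exact: leq_divM.
exact/ltnW/ltn_ceil.
Qed.

Lemma cnt_L a N : 0 < a ->
  \sum_(1 <= n < N.+1) (n \in L a : nat) = cc (N %/ a) (Mp a).
Proof.
move=> a0; rewrite /cc -sum_reindex //; apply: eq_big_nat => n /andP[n0 _].
have H := @Lchar a n a0 n0.
case: (boolP (n \in L a)) => h.
  by move: h => /set_mem /H /andP[-> ->].
case: ifP => // an; case: (boolP (coprime _ _)) => // cop.
by case/negP: h; apply/mem_set/H; rewrite an cop.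
Qed.

End Arith2.
Section Disj.
Local Open Scope nat_scope.

Lemma P_max a p : 1 < a -> prime p -> p %| a -> p <= P a.
Proof.
move=> a1 pp pa; apply: max_pdiv_max.
by rewrite mem_primes pp pa (ltnW a1).
Qed.

Lemma Ldiv a a' n : 1 < a -> 1 < a' -> L a n -> L a' n ->
  (P a < P a' \/ (P a = P a' /\ logn (P a) a <= logn (P a) a')) -> L a a'.
Proof.
move=> a1 a'1 [b [b0 [En Hb]]] [b' [b'0 [En' Hb']]] Hor.
have a0 : 0 < a by lia.
have a'0 : 0 < a' by lia.
have Hle : P a <= P a' by case: Hor => [|[->]]; lia.
have ndv : forall p x, 0 < x -> prime p -> ~~ (p %| x) -> logn p x = 0.
  by move=> p x x0 pp px; apply: logn_coprime; rewrite prime_coprime.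
have L1 : forall p, prime p -> logn p a <= logn p a'.
  move=> p pp.
  have E : logn p b + logn p a = logn p b' + logn p a'.
    by rewrite -!lognM // -En -En'.
  case: (ltnP p (P a')) => hp.
    have : logn p b' = 0.
      apply: ndv => //; apply/negP => /(Hb' _ pp); lia.
    lia.
  case: (ltnP (P a) p) => hq.
    have -> : logn p a = 0 by apply: ndv => //; apply/negP => /(@P_max a p a1 pp); lia.
    done.
  have e1 : p = P a by lia.
  have e2 : P a = P a' by lia.
  case: Hor => [?|[_ ?]]; first lia.
  by rewrite e1.
have aa' : a %| a'.
  apply/dvdn_partP => // p; rewrite mem_primes => /andP[pp _].
  by rewrite p_part pfactor_dvdn // L1.
exists (a' %/ a); split; last split.
- by rewrite divn_gt0 // dvdn_leq.
- by rewrite divnK.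
- move=> p pp pc; rewrite leqNgt; apply/negP => hp.
  have c0 : 0 < a' %/ a by rewrite divn_gt0 // dvdn_leq.
  have lb : logn p b = 0 by apply: ndv => //; apply/negP => /(Hb _ pp); lia.
  have lb' : logn p b' = 0 by apply: ndv => //; apply/negP => /(Hb' _ pp); lia.
  have E : logn p b + logn p a = logn p b' + logn p a'.
    by rewrite -!lognM // -En -En'.
  have E2 : logn p a' = logn p (a' %/ a) + logn p a.
    by rewrite -lognM // divnK.
  have : 0 < logn p (a' %/ a) by rewrite logn_gt0 mem_primes pp c0 pc.
  lia.
Qed.

Lemma Ldisj (A : set nat) a a' n : (forall a, A a -> 1 < a) -> Lprimitive A ->
  A a -> A a' -> L a n -> L a' n -> a = a'.
Proof.
move=> HA Hp Aa Aa' Ln Ln'.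
case: (eqVneq a a') => // ne; exfalso.
have a1 := HA _ Aa; have a'1 := HA _ Aa'.
case: (ltngtP (P a) (P a')) => h.
- by apply: (Hp _ _ Aa Aa' (elimN eqP ne)); apply: (@Ldiv a a' n a1 a'1 Ln Ln'); left.
- by apply: (Hp _ _ Aa' Aa (fun e => elimN eqP ne (esym e))); apply: (@Ldiv a' a n a'1 a1 Ln' Ln); left.
- case: (leqP (logn (P a) a) (logn (P a) a')) => hl.
  + by apply: (Hp _ _ Aa Aa' (elimN eqP ne)); apply: (@Ldiv a a' n a1 a'1 Ln Ln'); right.
  + apply: (Hp _ _ Aa' Aa (fun e => elimN eqP ne (esym e))); apply: (@Ldiv a' a n a'1 a1 Ln' Ln); right.
    by split; [rewrite h | rewrite -h; lia].
Qed.

End Disj.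
Section Count.
Local Open Scope nat_scope.

Definition cnt (S : set nat) (N : nat) := \sum_(1 <= n < N.+1) (n \in S : nat).

Lemma uniq_ii m n : uniq (index_iota m n).
Proof. exact: iota_uniq. Qed.

Lemma sum_ge_term (r : seq nat) (Pr : pred nat) (F : nat -> nat) j :
  j \in r -> uniq r -> Pr j -> F j <= \sum_(i <- r | Pr i) F i.
Proof.
by move=> jr ur Pj; rewrite big_mkcond (bigD1_seq j) //= Pj leq_addr.
Qed.

Lemma LA_mem (A : set nat) n : n \in LA A -> exists2 a, A a & L a n.
Proof. by move=> /set_mem [a Aa Ln]; exists a. Qed.

Lemma LA_memI (A : set nat) a n : A a -> L a n -> n \in LA A.
Proof. by move=> Aa Ln; apply/mem_set; exists a. Qed.
Arguments LA_mem {A n}.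
Arguments LA_memI {A a n}.
Arguments Ldisj {A a a' n}.

Lemma point_lower (A : set nat) K n : (forall a, A a -> 1 < a) -> Lprimitive A ->
  \sum_(0 <= a < K | a \in A) (n \in L a : nat) <= (n \in LA A : nat).
Proof.
move=> HA Hp; case: (boolP (n \in LA A)) => h.
  have [a0 Aa0 La0] := LA_mem h.
  apply: (@leq_trans (\sum_(0 <= a < K) (a == a0 : nat))).
    rewrite [X in X <= _]big_mkcond /=; apply: leq_sum => a _.
    case: ifP => // /set_mem Aa; case: (boolP (n \in L a)) => // /set_mem Ln.
    by rewrite (Ldisj HA Hp Aa Aa0 Ln La0) eqxx.
  have -> : \sum_(0 <= a < K) (a == a0 : nat) = \sum_(0 <= a < K | a == a0) 1.
    by rewrite [RHS]big_mkcond; apply: eq_bigr => a _; case: (a == a0).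
  by rewrite sum1_count count_uniq_mem ?uniq_ii //; case: (_ \in _).
rewrite big1 // => a /set_mem Aa; case: (boolP (n \in L a)) => // /set_mem Ln.
by case/negP: h; apply: LA_memI Aa Ln.
Qed.

Lemma cnt_lower (A : set nat) K N : (forall a, A a -> 1 < a) -> Lprimitive A ->
  \sum_(0 <= a < K | a \in A) cnt (L a) N <= cnt (LA A) N.
Proof.
move=> HA Hp; rewrite /cnt exchange_big_nat /=; apply: leq_sum => n _.
exact: point_lower.
Qed.

Lemma point_upper (A : set nat) K N n : (forall a, A a -> 1 < a) ->
  1 <= n < N.+1 ->
  (n \in LA A : nat) <= \sum_(0 <= a < K | a \in A) (n \in L a : nat)
     + \sum_(K <= a < N.+1 | a \in A) (a %| n : nat).
Proof.
move=> HA /andP[n1 nN]; case: (boolP (n \in LA A)) => // h.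
have [a0 Aa0 La0] := LA_mem h.
have Aa0' : a0 \in A by apply/mem_set.
case: (ltnP a0 K) => hK.
  apply: (leq_trans _ (leq_addr _ _)).
  apply: (@leq_trans (n \in L a0 : nat)); first by rewrite (mem_set La0).
  apply: (@sum_ge_term _ _ (fun a => (n \in L a : nat)) a0) => //.
    by rewrite mem_index_iota hK.
  exact: uniq_ii.
apply: (leq_trans _ (leq_addl _ _)).
have [b [_ [En _]]] := La0.
have dv : a0 %| n by rewrite En dvdn_mull.
apply: (@leq_trans (a0 %| n : nat)); first by rewrite dv.
apply: (@sum_ge_term _ _ (fun a => (a %| n : nat)) a0) => //.
  by rewrite mem_index_iota hK /=; have := @dvdn_leq a0 n n1 dv; lia.
exact: uniq_ii.
Qed.

Lemma cnt_upper (A : set nat) K N : (forall a, A a -> 1 < a) ->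
  cnt (LA A) N <= \sum_(0 <= a < K | a \in A) cnt (L a) N
     + \sum_(K <= a < N.+1 | a \in A) N %/ a.
Proof.
move=> HA.
rewrite [X in _ <= _ + X](eq_bigr (fun a => \sum_(1 <= n < N.+1) (a %| n : nat))); last first.
  by move=> a /set_mem /HA a1; rewrite sum_dvd //; lia.
rewrite /cnt exchange_big_nat [X in _ <= _ + X]exchange_big_nat -big_split /=.
rewrite big_nat_cond [X in _ <= X]big_nat_cond; apply: leq_sum => n /andP[nr _].
exact: point_upper.
Qed.

End Count.
From mathcomp Require Import ring lra.
Section Real.
Variable R : realType.
Local Open Scope ring_scope.

Lemma count_ratioE S N : count_ratio R S N = (cnt S N)%:R / N%:R.
Proof. by rewrite /count_ratio /cnt natr_sum. Qed.

Lemma phi_ratio n :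
  (totient (\prod_(p < n | prime p) p))%:R / (\prod_(p < n | prime p) p)%:R
  = \prod_(p < n | prime p) (1 - (p%:R)^-1) :> R.
Proof.
elim: n => [|n IH]; first by rewrite !big_ord0 divr1.
rewrite [in RHS]big_mkcond big_ord_recr /= -big_mkcond.
rewrite [in LHS]big_mkcond [in LHS]big_ord_recr /= -[in LHS]big_mkcond.
set m := (\prod_(p < n | prime p) p)%N in IH *.
have m0 : (0 < m)%N by rewrite /m big_mkcond prodn_gt0 // => i; case: ifP => // /prime_gt0.
case: ifP => pn; last by rewrite !muln1 mulr1 IH.
have cop : coprime m n.
  rewrite /m; apply: (big_ind (fun x => coprime x n)).
  + exact: coprime1n.
  + by move=> x y; rewrite coprimeMl => -> ->.
  + move=> [i /= lti] pi; rewrite prime_coprime // dvdn_prime2 //.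
    by apply/negP => /eqP ein; rewrite ein ltnn in lti.
rewrite totient_coprime // (totient_prime pn) -IH.
have n0 : (0 < n)%N by apply: prime_gt0.
rewrite -subn1 !natrM natrB // .
have mR : (m%:R : R) != 0 by rewrite pnatr_eq0 -lt0n.
have nR : (n%:R : R) != 0 by rewrite pnatr_eq0 -lt0n.
by field; rewrite nR mR.
Qed.
End Real.
Section Real2.
Variable R : realType.
Local Open Scope ring_scope.
Lemma aux_bounds (x q D N f : R) : 0 < D -> 0 < N -> 0 <= f -> q * D <= N ->
  N <= (q + 1) * D -> q * f <= x -> x <= (q + 1) * f ->
  f / D - f / N <= x / N <= f / D + f / N.
Proof.
move=> D0 N0 f0 h1 h2 h3 h4.
have u0 : 0 < N^-1 by rewrite invr_gt0.
have v0 : 0 < D^-1 by rewrite invr_gt0.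
have hu : N * N^-1 = 1 by rewrite mulfV // gt_eqF.
have hv : D * D^-1 = 1 by rewrite mulfV // gt_eqF.
set u := N^-1 in u0 hu *; set v := D^-1 in v0 hv *.
have e1 : q * f * u <= x * u by rewrite ler_wpM2r // ltW.
have e2 : x * u <= (q + 1) * f * u by rewrite ler_wpM2r // ltW.
have e3 : q * D * (f * u * v) <= N * (f * u * v) by rewrite ler_wpM2r // !mulr_ge0 // ltW.
have e4 : N * (f * u * v) <= (q + 1) * D * (f * u * v) by rewrite ler_wpM2r // !mulr_ge0 // ltW.
have E1 : q * D * (f * u * v) = q * f * u by rewrite -[RHS]mulr1 -hv; ring.
have E2 : N * (f * u * v) = f * v by rewrite -[RHS]mulr1 -hu; ring.
have E3 : (q + 1) * D * (f * u * v) = (q + 1) * f * u by rewrite -[RHS]mulr1 -hv; ring.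
rewrite E1 E2 in e3; rewrite E2 E3 in e4.
apply/andP; split; lra.
Qed.
End Real2.
Section Real3.
Variable R : realType.
Local Open Scope ring_scope.

Definition Cst (a : nat) : R := (totient (Mp a))%:R.

Lemma Cst_ge0 a : 0 <= Cst a.
Proof. exact: ler0n. Qed.

Lemma dL_eq a : (0 < a)%N -> dL R a = Cst a / (a * Mp a)%:R.
Proof.
move=> a0; rewrite /dL /Cst -phi_ratio -/(Mp a) natrM.
have mR : ((Mp a)%:R : R) != 0 by rewrite pnatr_eq0 -lt0n Mp_gt0.
have aR : (a%:R : R) != 0 by rewrite pnatr_eq0 -lt0n.
by field; rewrite mR aR.
Qed.

Lemma ratio_bounds a N : (0 < a)%N -> (0 < N)%N ->
  dL R a - Cst a / N%:R <= count_ratio R (L a) N <= dL R a + Cst a / N%:R.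
Proof.
move=> a0 N0; rewrite count_ratioE dL_eq // /cnt cnt_L //.
have M0 := Mp_gt0 a.
have D0 : (0 < a * Mp a)%N by rewrite muln_gt0 a0.
have := @cc_bounds (N %/ a) (Mp a) M0; rewrite -divnMA => /andP[l1 l2].
set q := (N %/ (a * Mp a))%N in l1 l2.
have h1 : (q * (a * Mp a) <= N)%N by apply: leq_divM.
have h2 : (N <= q.+1 * (a * Mp a))%N by apply/ltnW/ltn_ceil.
apply: (@aux_bounds _ _ q%:R); rewrite ?ltr0n ?ler0n //.
- by rewrite -natrM ler_nat.
- by rewrite natr1 -natrM ler_nat.
- by rewrite /Cst -natrM ler_nat.
- by rewrite /Cst natr1 -natrM ler_nat.
Qed.
End Real3.
Section Ana.
Variable R : realType.
Local Open Scope ring_scope.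

Definition psum (f : nat -> R) (A : set nat) K := \sum_(0 <= a < K | a \in A) f a.

Lemma psum_ge0 f A K : (forall a, 0 <= f a) -> 0 <= psum f A K.
Proof. by move=> f0; apply: sumr_ge0. Qed.

Lemma psum_mono f A K K' : (forall a, 0 <= f a) -> (K <= K')%N ->
  psum f A K <= psum f A K'.
Proof.
move=> f0 le; rewrite /psum [X in _ <= X](big_cat_nat _ (n := K)) //=.
by rewrite lerDl sumr_ge0.
Qed.

Local Open Scope ereal_scope.

Lemma psum_le_series f A K : (forall a, (0 <= f a)%R) ->
  (psum f A K)%:E <= \sum_(a <oo | a \in A) (f a)%:E.
Proof.
move=> f0; rewrite /psum -sumEFin; apply: nneseries_lim_ge => n _ _.
by rewrite lee_fin.
Qed.

Lemma series_le f A x : (forall a, (0 <= f a)%R) ->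
  (forall K, (psum f A K)%:E <= x) -> \sum_(a <oo | a \in A) (f a)%:E <= x.
Proof.
move=> f0 H; apply: lime_le.
  by apply: is_cvg_nneseries => n _ _; rewrite lee_fin.
by apply: nearW => K; rewrite sumEFin; apply: H.
Qed.

Lemma series_fin f A : (forall a, (0 <= f a)%R) ->
  \sum_(a <oo | a \in A) (f a)%:E < +oo ->
  let s := fine (\sum_(a <oo | a \in A) (f a)%:E) in
  [/\ \sum_(a <oo | a \in A) (f a)%:E = s%:E,
      (forall K, (psum f A K <= s)%R) &
      (forall e, (0 < e)%R -> exists K, forall K', (K <= K')%N -> (s - e <= psum f A K')%R)].
Proof.
move=> f0 fin s.
have ge0 : 0 <= \sum_(a <oo | a \in A) (f a)%:E.
  by apply: nneseries_ge0 => n _ _; rewrite lee_fin.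
have sE : \sum_(a <oo | a \in A) (f a)%:E = s%:E.
  by rewrite /s fineK // ge0_fin_numE.
split => //.
  by move=> K; rewrite -lee_fin -sE psum_le_series.
move=> e e0.
case: (pselect (exists K, (s - e <= psum f A K)%R)) => [[K hK]|nK].
  exists K => K' le; apply: (le_trans hK); exact: psum_mono.
exfalso.
have : \sum_(a <oo | a \in A) (f a)%:E <= (s - e)%:E.
  apply: series_le => // K; rewrite lee_fin; apply/ltW; rewrite ltNge.
  by apply/negP => h; apply: nK; exists K.
by rewrite sE lee_fin; lra.
Qed.

End Ana.
Arguments psum {R}.
Arguments psum_le_series {R}.
Arguments series_le {R}.
Arguments series_fin {R}.
Arguments psum_mono {R}.
Section Main.
Variable R : realType.
Local Open Scope ring_scope.

Lemma dL_ge0 a : 0 <= dL R a.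
Proof.
rewrite /dL mulr_ge0 ?invr_ge0 ?ler0n //.
apply: (big_ind (fun x : R => 0 <= x)) => //; first exact: mulr_ge0.
move=> [p /= _] pp; rewrite subr_ge0 invf_le1 ?ler1n ?prime_gt0 ?ltr0n ?prime_gt0 //.
Qed.

Lemma dL_le a : dL R a <= a%:R^-1.
Proof.
rewrite /dL ler_piMr ?invr_ge0 ?ler0n //.
have : 0 <= \prod_(p < P a | prime p) (1 - (p%:R : R)^-1) <= 1.
  apply: (big_ind (fun x : R => 0 <= x <= 1)); first by rewrite ler01 lexx.
    move=> x y /andP[x0 x1] /andP[y0 y1]; apply/andP; split; first exact: mulr_ge0.
    by rewrite mulr_ile1.
  move=> [p /= _] pp; rewrite subr_ge0 invf_le1 ?ler1n ?prime_gt0 ?ltr0n ?prime_gt0 //=.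
by case/andP.
Qed.

Lemma exists_N (E e : R) : 0 <= E -> 0 < e ->
  exists n0, (0 < n0)%N /\ forall m, (n0 <= m)%N -> E / m%:R <= e.
Proof.
move=> E0 e0; exists (Num.truncn (E / e)).+1; split => // m le.
have m0 : (0 < m)%N by apply: leq_trans le.
rewrite ler_pdivrMr ?ltr0n // -ler_pdivrMl //.
apply/ltW/(lt_le_trans (Num.Theory.truncnS_gt _)).
by rewrite mulrC ler_nat.
Qed.

Definition Esum (A : set nat) K := \sum_(0 <= a < K | a \in A) Cst R a.

Lemma lower_real (A : set nat) K m : (forall a, A a -> (1 < a)%N) -> Lprimitive A ->
  (0 < m)%N ->
  psum (dL R) A K - Esum A K / m%:R <= count_ratio R (LA A) m.
Proof.
move=> HA Hp m0.
apply: (@le_trans _ _ (\sum_(0 <= a < K | a \in A) count_ratio R (L a) m)).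
  rewrite /psum /Esum mulr_suml -sumrB; apply: ler_sum => a /set_mem /HA a1.
  by case/andP: (@ratio_bounds R a m ltac:(lia) m0).
rewrite count_ratioE (eq_bigr _ (fun a _ => count_ratioE R (L a) m)) -mulr_suml.
rewrite ler_wpM2r ?invr_ge0 ?ler0n // -natr_sum ler_nat.
exact: cnt_lower.
Qed.

Lemma upper_real (A : set nat) K m : (forall a, A a -> (1 < a)%N) ->
  (0 < m)%N ->
  count_ratio R (LA A) m <= psum (dL R) A K + Esum A K / m%:R
     + \sum_(K <= a < m.+1 | a \in A) a%:R^-1.
Proof.
move=> HA m0.
have mR : 0 < (m%:R : R) by rewrite ltr0n.
rewrite count_ratioE.
apply: (@le_trans _ _ ((\sum_(0 <= a < K | a \in A) cnt (L a) m
     + \sum_(K <= a < m.+1 | a \in A) (m %/ a)%N)%:R / m%:R)).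
  by rewrite ler_wpM2r ?invr_ge0 ?ler0n // ler_nat cnt_upper.
rewrite natrD mulrDl natr_sum natr_sum !mulr_suml; apply: lerD.
  rewrite /psum -big_split; apply: ler_sum => a /set_mem /HA a1 /=.
  by rewrite -count_ratioE; case/andP: (@ratio_bounds R a m ltac:(lia) m0).
apply: ler_sum => a /set_mem /HA a1.
have aR : 0 < (a%:R : R) by rewrite ltr0n; lia.
rewrite ler_pdivrMr // ler_pdivlMl // -natrM ler_nat mulnC.
exact: leq_divM.
Qed.

End Main.
Arguments Esum {R}.
Arguments exists_N {R}.
Arguments lower_real {R}.
Arguments upper_real {R}.

Lemma tail_le (R : realType) (A : set nat) K m (h : R) :
  (forall K, psum (fun a : nat => (a%:R)^-1 : R) A K <= h)%R ->
  (\sum_(K <= a < m.+1 | a \in A) (a%:R)^-1 <= h - psum (fun a : nat => (a%:R)^-1 : R) A K)%R.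
Proof.
move=> hK; case: (leqP K m.+1) => le.
  have := hK m.+1; rewrite /psum (big_cat_nat _ (n := K)) //=; lra.
by rewrite big_geq ?subr_ge0 ?hK // ltnW.
Qed.

Lemma Esum_ge0 (R : realType) A K : (0 <= Esum (R := R) A K)%R.
Proof. by apply: sumr_ge0 => a _; apply: Cst_ge0. Qed.

Local Open Scope ring_scope.
Local Open Scope ereal_scope.

Theorem lemma6p1 (R : realType) (A : set nat)
  (HA : forall a, A a -> (1 < a)%N) (Hprim : Lprimitive A) :
  (\sum_(a <oo | a \in A) (dL R a)%:E
     <= limn_einf (fun N => (count_ratio R (LA A) N)%:E))
  /\
  (\sum_(a <oo | a \in A) ((a%:R)^-1 : R)%:E < +oo ->
     (fun N => (count_ratio R (LA A) N)%:E) @ \oo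
       --> \sum_(a <oo | a \in A) (dL R a)%:E).
Proof.
have dL0 := @dL_ge0 R.
split.
  apply: series_le => // K; apply/lee_subgt0Pr => e e0.
  rewrite limn_einf_lim; apply: lime_ge; first exact: is_cvg_einfs.
  have [n0 [n00 Hn0]] := exists_N (Esum A K) e (Esum_ge0 _ _ _) e0.
  near=> n; rewrite /einfs /=; apply: le_ereal_inf_tmp => _ [m /= nm <-].
  have n0m : (n0 <= m)%N by apply: leq_trans nm; near: n; exists n0.
  have m0 : (0 < m)%N by apply: leq_trans n0m.
  rewrite -EFinB lee_fin.
  have := lower_real (R:=R) A K m HA Hprim m0; have := Hn0 m n0m; lra.
move=> Hinv.
have inv0 : forall a : nat, (0 <= (a%:R)^-1 :> R)%R by move=> a; rewrite invr_ge0 ler0n.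
have HdL : \sum_(a <oo | a \in A) (dL R a)%:E < +oo.
  apply: le_lt_trans Hinv; apply: lee_nneseries => [i _ _|n _]; rewrite lee_fin //.
  exact: dL_le.
have [sE sK sApp] := series_fin (dL R) A dL0 HdL.
have [hE hK hApp] := series_fin (fun a : nat => ((a%:R)^-1 : R)%R) A inv0 Hinv.
move: sE sK sApp hE hK hApp.
set s := fine _; set h := fine _ => sE sK sApp hE hK hApp.
rewrite sE; apply/fine_cvgP; split; first exact: nearW.
apply/cvgrPdist_le => e e0.
have [K1 HK1] := sApp (e / 2)%R ltac:(by rewrite divr_gt0).
have [K2 HK2] := hApp (e / 4)%R ltac:(by rewrite divr_gt0).
set K := maxn K1 K2.
have [n0 [n00 Hn0]] := exists_N (Esum A K) (e / 4)%R (Esum_ge0 _ _ _) ltac:(by rewrite divr_gt0).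
near=> m.
have n0m : (n0 <= m)%N by near: m; exists n0.
have m0 : (0 < m)%N by apply: leq_trans n0m.
rewrite /=.
have lo := lower_real (R:=R) A K m HA Hprim m0.
have up := upper_real (R:=R) A K m HA m0.
have t := @tail_le R A K m h hK.
have e1 := HK1 K (leq_maxl _ _).
have e2 := HK2 K (leq_maxr _ _).
have e3 := Hn0 m n0m.
have e4 := sK K.
rewrite ler_norml; apply/andP; split; lra.
Unshelve. all: by end_near.
Qed.
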